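(* The class of all irreflexive symmetric frames with at least $2$ elements is relatively elementary definable in $\mathcal{L}_2$.
   Context: A frame is a pair $(W,R)$ with $W$ non-empty and $R\subseteq W\times W$. For sets $A,B$ with $A\cap B=\emptyset$, $A\cup B\neq\emptyset$, and a function $\rho:A\to\wp(B)$, the galaxy $\mathcal{F}^{\rho}_{A,B}$ is the frame with universe $A\cup B$ and relation $\bigcup_{s\in A}(\{s\}\times\rho(s))\cup(B\times B)$. $\mathcal{L}_2$ is the class of all galaxies $\mathcal{F}^{\rho}_{A,B}$ with $|A|\ge4$, $|B|\ge4$ and $|B\setminus\rho(s)|=2$ for all $s\in A$. First-order formulas use one binary relation symbol $\mathbf{R}$ and equality. A class $\mathcal{C}$ of frames is relatively elementary definable in a class $\mathcal{C}'$ if there are first-order formulas $\mathbf{U}(\mathbf{x}_1,\mathbf{x}_2)$, $\mathbf{E}(\mathbf{x}_1,\mathbf{x}_2,\mathbf{y}_1,\mathbf{y}_2)$, $\mathbf{A}(\mathbf{x}_1,\mathbf{x}_2,\mathbf{y}_1,\mathbf{y}_2)$ such that for every frame $(W,R)\in\mathcal{C}$ there is a frame $(W',R')\in\mathcal{C}'$ such that, letting $X$ be the set of pairs $(s_1,s_2)\in W'^2$ satisfying $\mathbf{U}$ in $(W',R')$, $\eta$ the binary relation on $X$ defined by $\mathbf{E}$ and $S$ the binary relation on $X$ defined by $\mathbf{A}$: $X$ is non-empty, $\eta$ is a congruence on $(X,S)$ (an equivalence relation on $X$ such that $a\,\eta\,c$ and $b\,\eta\,d$ imply ($aSb$ iff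 $cSd$)), and the quotient $(X,S)/\eta$ is isomorphic to $(W,R)$. *)

(* Defs.v *)
From Stdlib Require Import Arith.

(** Frames: a carrier and a binary relation.  Non-emptiness is imposed
    by the classes considered below. *)
Record frame := Frame { W : Type; Rel : W -> W -> Prop }.

(** First-order formulas with one binary relation symbol and equality;
    variables are natural numbers (x1,x2,y1,y2 are 0,1,2,3). *)
Inductive form :=
| FBot : form
| FR : nat -> nat -> form
| FEq : nat -> nat -> form
| FNot : form -> form
| FAnd : form -> form -> form
| FOr : form -> form -> form
| FImp : form -> form -> form
| FAll : nat -> form -> form
| FEx : nat -> form -> form.

Fixpoint free_in (v : nat) (f : form) : bool :=
  match f with
  | FBot => false
  | FR i j | FEq i j => Nat.eqb v i || Nat.eqb v j
  | FNot g => free_in v g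
  | FAnd g h | FOr g h | FImp g h => free_in v g || free_in v h
  | FAll x g | FEx x g => negb (Nat.eqb v x) && free_in v g
  end.

Definition free_below (n : nat) (f : form) : Prop :=
  forall v, free_in v f = true -> v < n.

Definition upd {T : Type} (e : nat -> T) (x : nat) (d : T) : nat -> T :=
  fun v => if Nat.eqb v x then d else e v.

Fixpoint sat (F : frame) (e : nat -> W F) (f : form) : Prop :=
  match f with
  | FBot => False
  | FR i j => Rel F (e i) (e j)
  | FEq i j => e i = e j
  | FNot g => ~ sat F e g
  | FAnd g h => sat F e g /\ sat F e h
  | FOr g h => sat F e g \/ sat F e h
  | FImp g h => sat F e g -> sat F e h
  | FAll x g => forall d : W F, sat F (upd e x d) g
  | FEx x g => exists d : W F, sat F (upd e x d) g
  end.

(** assignments x1:=a1, x2:=a2 (resp. x1,x2,y1,y2 := a1,a2,b1,b2);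
    other variables are irrelevant since formulas are restricted by
    [free_below]. *)
Definition env2 {T : Type} (a1 a2 : T) : nat -> T :=
  fun v => match v with 0 => a1 | _ => a2 end.
Definition env4 {T : Type} (a1 a2 b1 b2 : T) : nat -> T :=
  fun v => match v with 0 => a1 | 1 => a2 | 2 => b1 | _ => b2 end.

Definition galaxy (T : Type) (A B : T -> Prop) (rho : T -> T -> Prop) : frame :=
  @Frame {x : T | A x \/ B x}
    (fun x y => (A (proj1_sig x) /\ rho (proj1_sig x) (proj1_sig y))
                \/ (B (proj1_sig x) /\ B (proj1_sig y))).

Definition at_least_4 {T : Type} (P : T -> Prop) : Prop :=
  exists a b c d, P a /\ P b /\ P c /\ P d /\
    a <> b /\ a <> c /\ a <> d /\ b <> c /\ b <> d /\ c <> d.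

Definition exactly_2 {T : Type} (P : T -> Prop) : Prop :=
  exists a b, a <> b /\ P a /\ P b /\ forall c, P c -> c = a \/ c = b.

Definition in_L2 (F : frame) : Prop :=
  exists (T : Type) (A B : T -> Prop) (rho : T -> T -> Prop),
    (forall x, A x -> B x -> False) /\
    (exists x, A x \/ B x) /\
    (forall s t, A s -> rho s t -> B t) /\          (* rho : A -> P(B) *)
    at_least_4 A /\ at_least_4 B /\
    (forall s, A s -> exactly_2 (fun t => B t /\ ~ rho s t)) /\
    F = galaxy T A B rho.

Definition quot_carrier {X : Type} (eta : X -> X -> Prop) : Type :=
  {P : X -> Prop | exists a, P = eta a}.
Definition quot_rel {X : Type} (eta S : X -> X -> Prop)
  (P Q : quot_carrier eta) : Prop :=
  exists a b, proj1_sig P = eta a /\ proj1_sig Q = eta b /\ S a b.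

Definition congruence {X : Type} (eta S : X -> X -> Prop) : Prop :=
  (forall a, eta a a) /\ (forall a b, eta a b -> eta b a) /\
  (forall a b c, eta a b -> eta b c -> eta a c) /\
  (forall a b c d, eta a c -> eta b d -> (S a b <-> S c d)).

Definition isomorphic {X Y : Type} (S : X -> X -> Prop) (R : Y -> Y -> Prop) : Prop :=
  exists f : X -> Y,
    (forall x y, f x = f y -> x = y) /\ (forall y, exists x, f x = y) /\
    (forall x y, S x y <-> R (f x) (f y)).

Definition rel_elem_definable (C C' : frame -> Prop) : Prop :=
  exists U E Af : form,
    free_below 2 U /\ free_below 4 E /\ free_below 4 Af /\
    forall F, C F -> exists F', C' F' /\
      let X := {p : W F' * W F' | sat F' (env2 (fst p) (snd p)) U} in
      let eta := fun a b : X => sat F'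
         (env4 (fst (proj1_sig a)) (snd (proj1_sig a))
               (fst (proj1_sig b)) (snd (proj1_sig b))) E in
      let S := fun a b : X => sat F'
         (env4 (fst (proj1_sig a)) (snd (proj1_sig a))
               (fst (proj1_sig b)) (snd (proj1_sig b))) Af in
      inhabited X /\ congruence eta S /\
      isomorphic (quot_rel eta S) (Rel F).

Definition irr_sym_2 (F : frame) : Prop :=
  (exists x y : W F, x <> y) /\
  (forall x, ~ Rel F x x) /\
  (forall x y, Rel F x y -> Rel F y x).

(* Main.v *)
Require Import Defs.
From Stdlib Require Import Classical ProofIrrelevance FunctionalExtensionality PropExtensionality ClassicalEpsilon Lia.

Inductive pt (V : Type) : Type :=
| PW (v : V) | PM (b : bool) | PE (u v : V) | PS (b1 b2 : bool).
Arguments PW {V}. Arguments PM {V}. Arguments PE {V}. Arguments PS {V}.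

Definition Aset {V} (RR : V -> V -> Prop) (x : pt V) : Prop :=
  match x with PE u v => RR u v | PS _ _ => True | _ => False end.
Definition Bset {V} (x : pt V) : Prop :=
  match x with PW _ | PM _ => True | _ => False end.
Definition rho {V} (s t : pt V) : Prop :=
  Bset t /\ match s with
            | PE u v => t <> PW u /\ t <> PW v
            | PS _ _ => t <> PM true /\ t <> PM false
            | _ => False end.
Definition G {V} (RR : V -> V -> Prop) := galaxy (pt V) (Aset RR) Bset rho.

Definition Uf := FAnd (FEq 0 1) (FAnd (FR 0 0) (FNot (FEx 2 (FEx 3 (FEx 4 (FEx 5
  (FAnd (FR 2 2) (FAnd (FNot (FEq 0 2))
  (FAnd (FNot (FR 3 3)) (FAnd (FNot (FR 4 4)) (FAnd (FNot (FR 5 5))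
  (FAnd (FNot (FEq 3 4)) (FAnd (FNot (FEq 3 5)) (FAnd (FNot (FEq 4 5))
  (FAnd (FNot (FR 3 0)) (FAnd (FNot (FR 3 2)) (FAnd (FNot (FR 4 0))
  (FAnd (FNot (FR 4 2)) (FAnd (FNot (FR 5 0)) (FNot (FR 5 2))))))))))))))))))))).
Definition Ef := FEq 0 2.
Definition Af := FAnd (FNot (FEq 0 2))
  (FEx 4 (FAnd (FNot (FR 4 4)) (FAnd (FNot (FR 4 0)) (FNot (FR 4 2))))).

Lemma fb_U : free_below 2 Uf.
Proof. intros v H. do 6 (destruct v as [|v]; [simpl in H; try discriminate; lia|]).
  simpl in H; discriminate. Qed.
Lemma fb_E : free_below 4 Ef.
Proof. intros v H. do 6 (destruct v as [|v]; [simpl in H; try discriminate; lia|]).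
  simpl in H; discriminate. Qed.
Lemma fb_A : free_below 4 Af.
Proof. intros v H. do 6 (destruct v as [|v]; [simpl in H; try discriminate; lia|]).
  simpl in H; discriminate. Qed.

Lemma main_iso {X Y : Type} (eta S : X -> X -> Prop) (R : Y -> Y -> Prop) (g : X -> Y) :
  (forall a b, eta a b <-> g a = g b) -> (forall y, exists a, g a = y) ->
  (forall a b, S a b <-> R (g a) (g b)) ->
  congruence eta S /\ isomorphic (quot_rel eta S) R.
Proof.
  intros He Hs Hr. split.
  { split; [|split; [|split]].
    - intros a; apply He; reflexivity.
    - intros a b H; apply He; apply He in H; auto.
    - intros a b c H1 H2; apply He; apply He in H1; apply He in H2; congruence.
    - intros a b c d H1 H2; apply He in H1; apply He in H2; rewrite !Hr;
      rewrite H1, H2; tauto. }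
  pose (rep := fun P : quot_carrier eta =>
           proj1_sig (constructive_indefinite_description _ (proj2_sig P))).
  assert (Hrep : forall P, proj1_sig P = eta (rep P)).
  { intro P. unfold rep. destruct (constructive_indefinite_description _ _); auto. }
  assert (Hg : forall P a, proj1_sig P = eta a -> g (rep P) = g a).
  { intros P a H. rewrite Hrep in H. apply He. rewrite H. apply He; reflexivity. }
  exists (fun P => g (rep P)). split; [|split].
  - intros P Q H. destruct P as [p hp], Q as [q hq].
    assert (p = q).
    { pose proof (Hrep (exist _ p hp)) as E1. pose proof (Hrep (exist _ q hq)) as E2.
      simpl in E1, E2. rewrite E1, E2. apply functional_extensionality; intro z.
      apply propositional_extensionality. rewrite !He. rewrite H. tauto. }
    subst q. f_equal. apply proof_irrelevance.
  - intro y. destruct (Hs y) as [a Ha].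
    exists (exist _ (eta a) (ex_intro _ a eq_refl)). rewrite <- Ha. apply Hg. reflexivity.
  - intros P Q. split.
    + intros (a & b & H1 & H2 & H3). rewrite (Hg _ _ H1), (Hg _ _ H2). apply Hr; auto.
    + intros H. exists (rep P), (rep Q). split; [apply Hrep|]. split; [apply Hrep|].
      apply Hr; auto.
Qed.

Definition mk {V} (RR : V -> V -> Prop) (t : pt V) (h : Aset RR t \/ Bset t) : W (G RR) :=
  exist _ t h.

Lemma sig_eq {V} (RR : V -> V -> Prop) (x y : W (G RR)) :
  proj1_sig x = proj1_sig y -> x = y.
Proof. destruct x, y; simpl; intros ->; f_equal; apply proof_irrelevance. Qed.

Lemma relG_B {V} (RR : V -> V -> Prop) (x : W (G RR)) :
  Rel (G RR) x x -> Bset (proj1_sig x).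
Proof. destruct x as [t h]; simpl. intros [[_ [Hb _]] | [Hb _]]; auto. Qed.

Lemma nrel_A {V} (RR : V -> V -> Prop) (x : W (G RR)) :
  ~ Rel (G RR) x x -> Aset RR (proj1_sig x).
Proof. destruct x as [t [Ha|Hb]]; simpl; auto. intro H; exfalso; apply H; right; auto. Qed.
Lemma K1 {V} (RR : V -> V -> Prop) (a1 a2 : W (G RR)) :
  sat (G RR) (env2 a1 a2) Uf -> exists w, proj1_sig a1 = PW w.
Proof.
  intros H. simpl in H; unfold upd in H; simpl in H. destruct H as [_ [HR HN]].
  apply relG_B in HR. destruct a1 as [t ht]; simpl in *.
  destruct t; simpl in HR; try contradiction; eauto.
  exfalso; apply HN.
  exists (mk RR (PM (negb b)) (or_intror I)), (mk RR (PS true true) (or_introl I)),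
    (mk RR (PS true false) (or_introl I)), (mk RR (PS false true) (or_introl I)).
  repeat match goal with |- _ /\ _ => split end.
  all: try (right; simpl; auto; fail).
  all: try (let E := fresh in intro E; apply (f_equal (@proj1_sig _ _)) in E; simpl in E; destruct b; discriminate).
  all: unfold rho; simpl; intros [[_ [? ?]] | [[] _]]; destruct b; simpl in *; tauto.
Qed.
Lemma code_shape {V} (RR : V -> V -> Prop) (w : V) (s d : W (G RR)) :
  Aset RR (proj1_sig s) -> Bset (proj1_sig d) -> proj1_sig d <> PW w ->
  ~ Rel (G RR) s (mk RR (PW w) (or_intror I)) -> ~ Rel (G RR) s d ->
  exists c, proj1_sig d = PW c /\ (proj1_sig s = PE w c \/ proj1_sig s = PE c w).
Proof.
  destruct s as [t ht], d as [t2 h2]; simpl. intros Ha Hb Hne H1 H2.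
  assert (N1 : ~ rho t (PW w)) by (intro; apply H1; left; auto).
  assert (N2 : ~ rho t t2) by (intro; apply H2; left; auto).
  destruct t as [| |u v|]; simpl in Ha; try contradiction.
  - unfold rho in N1, N2. simpl in N1.
    destruct t2 as [c| | |]; simpl in Hb; try contradiction.
    + exists c. split; auto.
      assert (w = u \/ w = v) as Hw.
      { apply NNPP; intro; apply N1; split; [exact I| split; intro E; injection E; tauto]. }
      assert (c = u \/ c = v) as Hc.
      { apply NNPP; intro; apply N2; split; [exact I| split; intro E; injection E; tauto]. }
      destruct Hw, Hc; subst; auto; congruence.
    + exfalso; apply N2; repeat split; discriminate.
  - exfalso; apply N1; repeat split; discriminate.
Qed.

Lemma K2 {V} (RR : V -> V -> Prop) (w : V) :
  sat (G RR) (env2 (mk RR (PW w) (or_intror I)) (mk RR (PW w) (or_intror I))) Uf.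
Proof.
  simpl; unfold upd; simpl. split; [reflexivity|]. split; [right; simpl; auto|].
  intros (d & s3 & s4 & s5 & HB & Hne & HA3 & HA4 & HA5 & n34 & n35 & n45 & r30 & r32 & r40 & r42 & r50 & r52).
  apply relG_B in HB. apply nrel_A in HA3. apply nrel_A in HA4. apply nrel_A in HA5.
  assert (Hne' : proj1_sig d <> PW w).
  { intro E; apply Hne; apply sig_eq; simpl; auto. }
  destruct (code_shape RR w s3 d HA3 HB Hne' r30 r32) as (c3 & Ec3 & H3).
  destruct (code_shape RR w s4 d HA4 HB Hne' r40 r42) as (c4 & Ec4 & H4).
  destruct (code_shape RR w s5 d HA5 HB Hne' r50 r52) as (c5 & Ec5 & H5).
  rewrite Ec3 in Ec4, Ec5. injection Ec4; injection Ec5; intros; subst.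
  destruct H3, H4, H5;
  first [apply n34; apply sig_eq; congruence | apply n35; apply sig_eq; congruence
        | apply n45; apply sig_eq; congruence].
Qed.
Lemma K3 {V} (RR : V -> V -> Prop) (Hirr : forall x, ~ RR x x)
  (Hsym : forall x y, RR x y -> RR y x) (x a y b : W (G RR)) (u v : V) :
  proj1_sig x = PW u -> proj1_sig y = PW v ->
  (sat (G RR) (env4 x a y b) Af <-> RR u v).
Proof.
  intros Ex Ey. simpl; unfold upd; simpl. split.
  - intros [Hne [z [Hz1 [Hz2 Hz3]]]].
    apply nrel_A in Hz1.
    assert (N1 : ~ rho (proj1_sig z) (PW u)) by (rewrite <- Ex; intro; apply Hz2; left; auto).
    assert (N2 : ~ rho (proj1_sig z) (PW v)) by (rewrite <- Ey; intro; apply Hz3; left; auto).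
    assert (Huv : u <> v) by (intro; subst; apply Hne; apply sig_eq; congruence).
    destruct (proj1_sig z) as [| |p q|]; simpl in Hz1; try contradiction.
    + unfold rho in N1, N2.
      assert (u = p \/ u = q) as Hu.
      { apply NNPP; intro; apply N1; split; [exact I| split; intro E; injection E; tauto]. }
      assert (v = p \/ v = q) as Hv.
      { apply NNPP; intro; apply N2; split; [exact I| split; intro E; injection E; tauto]. }
      destruct Hu, Hv; subst; auto; congruence.
    + exfalso; apply N1; repeat split; discriminate.
  - intros H. split.
    + intro E. assert (u = v) by congruence. subst; eapply Hirr; eauto.
    + exists (mk RR (PE u v) (or_introl H)). unfold rho; simpl; rewrite Ex, Ey.
      repeat split; intros [[_ [Hb ?]] | [Hb _]]; simpl in Hb; try contradiction; tauto.
Qed.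
Lemma L2 {V} (RR : V -> V -> Prop) (Hirr : forall x, ~ RR x x) (x0 y0 : V) :
  x0 <> y0 -> in_L2 (G RR).
Proof.
  intros Hxy. exists (pt V), (Aset RR), Bset, rho.
  split; [intros [] ; simpl; tauto|].
  split; [exists (PM true); right; exact I|].
  split; [intros s t _ [H _]; exact H|].
  split.
  { exists (PS true true), (PS true false), (PS false true), (PS false false).
    repeat split; discriminate. }
  split.
  { exists (PW x0), (PW y0), (PM true), (PM false).
    repeat split; try discriminate. intro E; injection E; auto. }
  split; [|reflexivity].
  intros [| |u v|] Hs; simpl in Hs; try contradiction.
  - exists (PW u), (PW v). split; [intro E; injection E; intro; subst; eapply Hirr; eauto|].
    unfold rho. split; [split; [exact I| tauto]|]. split; [split; [exact I| tauto]|].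
    intros c [Hc Hn]. apply NNPP; intro Hno; apply Hn. split; auto; split; intro E; apply Hno; auto.

  - exists (PM true), (PM false). split; [discriminate|].
    unfold rho. split; [split; [exact I| tauto]|]. split; [split; [exact I| tauto]|].
    intros c [Hc Hn]. apply NNPP; intro Hno; apply Hn. split; auto; split; intro E; apply Hno; auto.

Qed.

Definition getw {V} (x0 : V) (t : pt V) : V := match t with PW w => w | _ => x0 end.

Theorem lemma48 : rel_elem_definable irr_sym_2 in_L2.
Proof.
  exists Uf, Ef, Af. split; [exact fb_U|]. split; [exact fb_E|]. split; [exact fb_A|].
  intros F [[x0 [y0 Hxy]] [Hirr Hsym]].
  exists (G (Rel F)). split; [exact (L2 (Rel F) Hirr x0 y0 Hxy)|].
  cbv zeta.
  set (X := {p : W (G (Rel F)) * W (G (Rel F)) | sat (G (Rel F)) (env2 (fst p) (snd p)) Uf}).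
  pose (g := fun p : X => getw x0 (proj1_sig (fst (proj1_sig p)))).
  assert (Hg : forall p : X, proj1_sig (fst (proj1_sig p)) = PW (g p)).
  { intros [[a1 a2] H]. simpl in *. destruct (K1 _ a1 a2 H) as [w Hw].
    unfold g; simpl. rewrite Hw; reflexivity. }
  assert (Hsurj : forall y, exists a : X, g a = y).
  { intro y. exists (exist _ (mk (Rel F) (PW y) (or_intror I), mk (Rel F) (PW y) (or_intror I))
                      (K2 (Rel F) y)). reflexivity. }
  split.
  { destruct (Hsurj x0) as [a _]; exact (inhabits a). }
  apply main_iso with (g := g); auto.
  - intros a b. simpl. split.
    + intro E. pose proof (Hg a) as Ha. pose proof (Hg b) as Hb.
      apply (f_equal (@proj1_sig _ _)) in E. pose proof (eq_trans (eq_sym Ha) (eq_trans E Hb)) as E2. injection E2; auto.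
    + intro E. apply sig_eq. pose proof (Hg a) as Ha. pose proof (Hg b) as Hb.
      rewrite E in Ha. exact (eq_trans Ha (eq_sym Hb)).
  - intros a b. apply K3; auto.
Qed.
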